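(* For any subsets $I,J\subseteq\{1,\dots,n\}$, there are signs $\epsilon(I,J,R)\in\{\pm1\}$ such that \[ \beta(e_I,e_J)=2^{|I\cap J|}\sum_{R\subseteq I\Delta J}\epsilon(I,J,R)\, e_{I\cap J}\wedge e_R\wedge f_{I^c\cap J^c}\wedge f_R , \] where $I\Delta J=(I\setminus J)\cup(J\setminus I)$ and $I^c$ denotes the complement of $I$ in $\{1,\dots,n\}$.
   Context: Let $V$ be a complex vector space of dimension $2n$ with a nondegenerate symmetric bilinear form $q$, and $V=E\oplus F$ with $E,F$ maximal isotropic, with bases $e_1,\dots,e_n$ of $E$ and $f_1,\dots,f_n$ of $F$ such that $q(e_i,f_j)=\delta_{ij}$. For $v\in V$ let $o(v)$ be exterior multiplication by $v$ on $\wedge V$ and $i(v)$ the contraction $i(v)(v_1\wedge\cdots\wedge v_k)=\sum_j(-1)^{j-1}q(v,v_j)v_1\wedge\cdots\widehat{v_j}\cdots\wedge v_k$; set $\psi(v)=o(v)+i(v)$. The Clifford algebra $Cl(V)$ is the tensor algebra of $V$ modulo $v\otimes w+w\otimes v=2q(v,w)1$; $\psi$ extends to an algebra map $Cl(V)\to\mathrm{End}(\wedge V)$ and $\theta:Cl(V)\to\wedge V$, $x\mapsto\psi(x)\cdot 1$, is a linear isomorphism; we identify $Cl(V)$ with $\wedge V$ through $\theta$. In particular $Cl(E)\subset Cl(V)$ is identified with $\wedge E$ (a product $e_{i_1}\cdots e_{i_k}$ of distinct basis vectors of $E$ corresponds to $e_{i_1}\wedge\cdots\wedge e_{i_k}$).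 For $I=\{i_1<\dots<i_k\}$ write $e_I=e_{i_1}\wedge\cdots\wedge e_{i_k}$, $f_I=f_{i_1}\wedge\cdots\wedge f_{i_k}$ (equal to the corresponding Clifford products). Let $f=f_1f_2\cdots f_n\in Cl(V)$, and let $\alpha$ be the main anti-automorphism of $Cl(V)$, the unique algebra anti-automorphism restricting to the identity on $V$ (so $\alpha(v_1\cdots v_r)=v_r\cdots v_1$). For $u,v\in\wedge E\subset Cl(V)$ define $\beta(u,v)=\theta(u\,f\,\alpha(v))\in\wedge V$. *)

(* Defs.v *)
(* Concrete model of the exterior algebra /\V, V = E (+) F,
   dim V = 2n, with coefficients in algC (algebraic complex numbers). *)
From HB Require Import structures.
From mathcomp Require Import all_boot all_order all_algebra all_field.
Set Implicit Arguments. Unset Strict Implicit. Unset Printing Implicit Defensive.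
Import Order.TTheory GRing.Theory Num.Theory.
Local Open Scope ring_scope.

(* Basis of V indexed by 'I_(n+n): lshift n i = e_(i+1), rshift n i = f_(i+1);
   the ordering e_1 < ... < e_n < f_1 < ... < f_n is used for monomials. *)
Definition eidx n (i : 'I_n) : 'I_(n + n) := lshift n i.
Definition fidx n (i : 'I_n) : 'I_(n + n) := rshift n i.

(* /\V : coefficient functions on the monomial basis e_A, A a subset of the
   basis, written in increasing order. *)
Notation ext n := {ffun {set 'I_(n + n)} -> algC}.

Definition sc n (c : algC) (x : ext n) : ext n := [ffun B => c * x B].

Definition mono n (A : {set 'I_(n + n)}) : ext n := [ffun B => (B == A)%:R].

(* e_A /\ e_B = wsign A B * e_(A u B) *)
Definition wsign n (A B : {set 'I_(n + n)}) : algC :=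
  if [disjoint A & B]
  then (-1) ^+ #|[set p in setX A B | (val p.2 < val p.1)%N]|
  else 0.

Definition wedge n (x y : ext n) : ext n :=
  \sum_(A : {set 'I_(n + n)}) \sum_(B : {set 'I_(n + n)})
     sc (x A * y B * wsign A B) (mono (A :|: B)).

Definition vec n (k : 'I_(n + n)) : ext n := mono [set k].

(* The bilinear form q on basis vectors: q(e_i,f_j) = q(f_j,e_i) = delta_ij,
   q(e_i,e_j) = q(f_i,f_j) = 0. *)
Definition partner n (k : 'I_(n + n)) : 'I_(n + n) :=
  match split k with inl j => rshift n j | inr j => lshift n j end.
Definition qb n (k a : 'I_(n + n)) : algC := (partner k == a)%:R.

(* contraction i(b_k): i(v)(v_1/\.../\v_m) = sum_j (-1)^(j-1) q(v,v_j) ...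
   (position j-1 of a in increasing A = number of elements of A below a) *)
Definition contr n (k : 'I_(n + n)) (x : ext n) : ext n :=
  \sum_(A : {set 'I_(n + n)}) sc (x A)
     (\sum_(a in A) sc (((-1) ^+ #|[set b in A | (val b < val a)%N]|) * qb k a)
                        (mono (A :\ a))).

Definition psi n (k : 'I_(n + n)) (x : ext n) : ext n :=
  wedge (vec k) x + contr k x.

(* psi(v_1 v_2 ... v_m) x = psi(v_1)(psi(v_2)(...(psi(v_m) x))) *)
Definition psi_seq n (s : seq 'I_(n + n)) (x : ext n) : ext n :=
  foldr (fun k y => psi k y) x s.

Definition one_ext n : ext n := mono set0.

(* e_S and f_S in /\V (elements listed in increasing order) *)
Definition eS n (S : {set 'I_n}) : ext n := mono (@eidx n @: S).
Definition fS n (S : {set 'I_n}) : ext n := mono (@fidx n @: S).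

(* beta(e_I, e_J) = theta(e_I f alpha(e_J)) = psi(e_I f alpha(e_J)) . 1, where
   e_I = e_(i1)...e_(ik) (Clifford product, i1<...<ik), f = f_1...f_n and
   alpha(e_J) = e_(jl)...e_(j1). *)
Definition beta_e n (I J : {set 'I_n}) : ext n :=
  psi_seq (map (@eidx n) (enum I))
    (psi_seq (map (@fidx n) (enum [set: 'I_n]))
      (psi_seq (rev (map (@eidx n) (enum J))) (one_ext n))).

(* Main.v *)
Require Import Defs.
From HB Require Import structures.
From mathcomp Require Import all_boot all_order all_algebra all_field.
Set Implicit Arguments. Unset Strict Implicit. Unset Printing Implicit Defensive.
Import Order.TTheory GRing.Theory Num.Theory.
Local Open Scope ring_scope.



Lemma scA n a b (x : ext n) : sc a (sc b x) = sc (a * b) x.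
Proof. by apply/ffunP => B; rewrite !ffunE mulrA. Qed.
Lemma scDl n a b (x : ext n) : sc (a + b) x = sc a x + sc b x.
Proof. by apply/ffunP => B; rewrite !ffunE mulrDl. Qed.
Lemma scDr n a (x y : ext n) : sc a (x + y) = sc a x + sc a y.
Proof. by apply/ffunP => B; rewrite !ffunE mulrDr. Qed.
Lemma sc1 n (x : ext n) : sc 1 x = x.
Proof. by apply/ffunP => B; rewrite !ffunE mul1r. Qed.
Lemma sc0 n (x : ext n) : sc 0 x = 0.
Proof. by apply/ffunP => B; rewrite !ffunE mul0r. Qed.
Lemma scr0 n a : sc a (0 : ext n) = 0.
Proof. by apply/ffunP => B; rewrite !ffunE mulr0. Qed.
Lemma scNr n a (x : ext n) : sc a (- x) = - sc a x.
Proof. by apply/ffunP => B; rewrite !ffunE mulrN. Qed.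
Lemma scNl n a (x : ext n) : sc (- a) x = - sc a x.
Proof. by apply/ffunP => B; rewrite !ffunE mulNr. Qed.
Lemma sc_sumr n a (I : finType) (P : pred I) (G : I -> ext n) :
  sc a (\sum_(i | P i) G i) = \sum_(i | P i) sc a (G i).
Proof.
apply: (big_morph _ (@scDr n a) (scr0 n a)).
Qed.

Definition elin n (F : {set 'I_(n+n)} -> ext n) (x : ext n) : ext n :=
  \sum_B sc (x B) (F B).

Lemma elin_mono n F (A : {set 'I_(n+n)}) : elin F (mono A) = F A.
Proof.
rewrite /elin (bigD1 A) //= big1 => [|B /negbTE nB]; rewrite ffunE ?eqxx ?nB.
  by rewrite sc1 addr0.
by rewrite sc0.
Qed.

Lemma elinD n F (x y : ext n) : elin F (x + y) = elin F x + elin F y.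
Proof. by rewrite /elin -big_split; apply: eq_bigr => B _; rewrite ffunE scDl. Qed.

Lemma elinZ n F a (x : ext n) : elin F (sc a x) = sc a (elin F x).
Proof. by rewrite /elin sc_sumr; apply: eq_bigr => B _; rewrite ffunE scA. Qed.

Lemma elin0 n F : elin F (0 : ext n) = 0.
Proof. by rewrite /elin big1 // => B _; rewrite ffunE sc0. Qed.

Lemma elinN n F (x : ext n) : elin F (- x) = - elin F x.
Proof. by rewrite -{1}[x]sc1 -scNl elinZ scNl sc1. Qed.

Lemma elin_sum n F (I : finType) (P : pred I) (G : I -> ext n) :
  elin F (\sum_(i | P i) G i) = \sum_(i | P i) elin F (G i).
Proof. exact: (big_morph _ (@elinD n F) (elin0 F)). Qed.

Lemma elin_comp n F G (x : ext n) :
  elin F (elin G x) = \sum_B sc (x B) (elin F (G B)).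
Proof. by rewrite [elin G x]/elin elin_sum; apply: eq_bigr => B _; rewrite elinZ. Qed.

Lemma elin_anti n F G :
  (forall A : {set 'I_(n+n)}, elin F (G A) = - elin G (F A)) ->
  forall x : ext n, elin F (elin G x) = - elin G (elin F x).
Proof.
move=> H x; rewrite !elin_comp -sumrN; apply: eq_bigr => B _.
by rewrite H scNr.
Qed.

Lemma elin_addF n F G (x : ext n) : elin (fun A => F A + G A) x = elin F x + elin G x.
Proof. by rewrite /elin -big_split; apply: eq_bigr => B _; rewrite scDr. Qed.


Definition cnt n (A : {set 'I_(n+n)}) (k : 'I_(n+n)) := #|[set b in A | (val b < val k)%N]|.
Definition sg n (A : {set 'I_(n+n)}) k : algC := (-1) ^+ cnt A k.
Definition Oo n (k : 'I_(n+n)) (A : {set 'I_(n+n)}) : ext n :=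
  if k \in A then 0 else sc (sg A k) (mono (k |: A)).
Definition Cc n (k : 'I_(n+n)) (A : {set 'I_(n+n)}) : ext n :=
  if partner k \in A then sc (sg A (partner k)) (mono (A :\ partner k)) else 0.

Lemma wedge_vecE n k (x : ext n) : wedge (vec k) x = elin (Oo k) x.
Proof.
rewrite /wedge (bigD1 [set k]) //= [X in _ + X]big1 => [|A nA]; last first.
  by apply: big1 => B _; rewrite /vec ffunE (negbTE nA) !mul0r sc0.
rewrite addr0 /elin; apply: eq_bigr => B _.
rewrite /vec ffunE eqxx mul1r /Oo /wsign disjoints1.
case: (boolP (k \in B)) => kB /=; first by rewrite mulr0 sc0 scr0.
rewrite -scA; congr sc; congr sc; rewrite /sg /cnt; congr (_ ^+ _).
have -> : [set p in setX [set k] B | (val p.2 < val p.1)%N] =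
          (fun b => (k, b)) @: [set b in B | (val b < val k)%N].
  apply/setP => -[a b]; rewrite !inE /=; apply/idP/imsetP.
    move=> /andP[/andP[/eqP ea bB] lt]; subst a; by exists b; rewrite // inE bB.
  move=> [c]; rewrite inE => /andP[cB lt] e; case: e => ea eb; subst a b. by rewrite eqxx cB lt.
by apply: card_imset => b c [] .
Qed.

Lemma contrE n k (x : ext n) : contr k x = elin (Cc k) x.
Proof.
rewrite /contr /elin; apply: eq_bigr => A _; congr sc.
rewrite /Cc /qb; case: ifP => pA.
  rewrite (bigD1 (partner k)) //= big1 => [|a /andP[aA na]].
    by rewrite eqxx mulr1 addr0.
  by rewrite eq_sym (negbTE na) mulr0 sc0.
apply: big1 => a aA; case: eqP => [e|]; last by rewrite mulr0 sc0.
by move: pA; rewrite e aA.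
Qed.

Lemma psiE n k (x : ext n) : psi k x = elin (fun A => Oo k A + Cc k A) x.
Proof. by rewrite elin_addF /psi wedge_vecE contrE. Qed.

Lemma cntU1 n (l k : 'I_(n+n)) (A : {set 'I_(n+n)}) : l \notin A ->
  cnt (l |: A) k = ((val l < val k) + cnt A k)%N.
Proof.
move=> lA; rewrite /cnt; case: (ltnP l k) => h.
  have -> : [set b in l |: A | (val b < val k)%N] = l |: [set b in A | (val b < val k)%N].
    apply/setP => b; rewrite !inE; case: (eqVneq b l) => [->|] //=.
  by rewrite cardsU1 inE (negbTE lA).
have -> : [set b in l |: A | (val b < val k)%N] = [set b in A | (val b < val k)%N].
  apply/setP => b; rewrite !inE; case: (eqVneq b l) => [->|] //=.
  by rewrite (negbTE lA) ltnNge h.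
by [].
Qed.

Lemma sgU1 n (l k : 'I_(n+n)) (A : {set 'I_(n+n)}) : l \notin A ->
  sg (l |: A) k = (-1) ^+ (val l < val k)%N * sg A k.
Proof. by move=> lA; rewrite /sg cntU1 // exprD. Qed.

Lemma sgD1 n (l k : 'I_(n+n)) (A : {set 'I_(n+n)}) : l \in A ->
  sg (A :\ l) k = (-1) ^+ (val l < val k)%N * sg A k.
Proof.
move=> lA; rewrite -{2}(setD1K lA) sgU1 ?signrMK //.
by rewrite !inE eqxx.
Qed.

Lemma sgK n (A : {set 'I_(n+n)}) k : sg A k * sg A k = 1.
Proof. by rewrite /sg -exprD addnn -mul2n exprM sqrrN !expr1n. Qed.

Lemma sign_lt (a b : nat) : a != b ->
  (-1) ^+ (a < b)%N * (-1) ^+ (b < a)%N = - 1 :> algC.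
Proof.
move=> ne; case: (ltngtP a b) ne => // h _.
  by rewrite expr1 expr0 mulr1.
by rewrite expr1 expr0 mul1r.
Qed.


Lemma sign_swap (a b : nat) : a != b ->
  (-1) ^+ (a < b)%N = - (-1) ^+ (b < a)%N :> algC.
Proof.
by case: (ltngtP a b) => //= _ _; rewrite ?opprK.
Qed.

Lemma elin_scm n F c (S : {set 'I_(n+n)}) : elin F (sc c (mono S)) = sc c (F S).
Proof. by rewrite elinZ elin_mono. Qed.

Lemma OO n (k l : 'I_(n+n)) (A : {set 'I_(n+n)}) : val k != val l ->
  elin (Oo k) (Oo l A) = - elin (Oo l) (Oo k A).
Proof.
move=> ne; have ne' : k != l by apply: contra ne => /eqP->.
rewrite [Oo l A]/Oo [Oo k A]/Oo.
case: (boolP (l \in A)) => lA; case: (boolP (k \in A)) => kA.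
all: rewrite ?elin0 ?oppr0 ?elin_scm //=.
all: rewrite /Oo !in_setU1 ?(negbTE lA) ?(negbTE kA) ?lA ?kA ?orbT ?scr0 ?oppr0 //.
rewrite (negbTE ne') eq_sym (negbTE ne') /= !scA !sgU1 // setUCA -scNl; congr sc.
rewrite (sign_swap ne) mulNr mulrN opprK mulrCA [RHS]mulrCA.
by congr (_ * _); rewrite mulrC.
Qed.

Lemma CC n (k l : 'I_(n+n)) (A : {set 'I_(n+n)}) : val (partner k) != val (partner l) ->
  elin (Cc k) (Cc l A) = - elin (Cc l) (Cc k A).
Proof.
move=> ne; have ne' : partner k != partner l by apply: contra ne => /eqP->.
rewrite [Cc l A]/Cc [Cc k A]/Cc.
case: (boolP (partner l \in A)) => lA; case: (boolP (partner k \in A)) => kA.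
all: rewrite ?elin0 ?oppr0 ?elin_scm //=.
all: rewrite /Cc !in_setD1 ?(negbTE lA) ?(negbTE kA) ?lA ?kA ?andbF ?scr0 ?oppr0 //.
rewrite ne' eq_sym ne' /= !scA !sgD1 // !setDDl setUC -scNl; congr sc.
rewrite (sign_swap ne) mulNr mulrN opprK mulrCA [RHS]mulrCA.
by congr (_ * _); rewrite mulrC.
Qed.

Lemma OC n (k l : 'I_(n+n)) (A : {set 'I_(n+n)}) : val k != val (partner l) ->
  elin (Oo k) (Cc l A) = - elin (Cc l) (Oo k A).
Proof.
move=> ne; have ne' : k != partner l by apply: contra ne => /eqP->.
rewrite [Cc l A]/Cc [Oo k A]/Oo.
case: (boolP (partner l \in A)) => lA; case: (boolP (k \in A)) => kA.
all: rewrite ?elin0 ?oppr0 ?elin_scm //=.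
all: rewrite /Oo /Cc ?in_setD1 ?in_setU1 ?(negbTE lA) ?(negbTE kA) ?lA ?kA ?ne' ?andbF ?andbT ?orbF ?scr0 ?oppr0 //.
all: rewrite ?(eq_sym (partner l)) ?(negbTE ne') ?scr0 ?oppr0 //=.
rewrite !scA sgD1 // sgU1 //.
have -> : (k |: A) :\ partner l = k |: (A :\ partner l).
  apply/setP => x; rewrite !inE; case: (eqVneq x k) => [->|] //=.
  by rewrite ne'.
rewrite -scNl; congr sc.
rewrite (sign_swap ne) mulNr mulrN opprK mulrCA [RHS]mulrCA.
by congr (_ * _); rewrite mulrC.
Qed.

Definition ix n (k : 'I_(n+n)) : nat := if (val k < n)%N then val k else (val k - n)%N.

Lemma ix_partner n (k : 'I_(n+n)) : ix (partner k) = ix k.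
Proof.
rewrite /partner /ix; case: (splitP k) => j hk /=.
  by rewrite ltnNge leq_addr /= addKn hk.
by rewrite ltn_ord hk addKn.
Qed.

Lemma ix_val n (a b : 'I_(n+n)) : ix a != ix b -> val a != val b.
Proof. by apply: contra => /eqP e; rewrite /ix e. Qed.

Lemma psi_anti n (k l : 'I_(n+n)) (x : ext n) : ix k != ix l ->
  psi k (psi l x) = - psi l (psi k x).
Proof.
move=> ne.
have h1 : val k != val l by apply: ix_val.
have h2 : val (partner k) != val (partner l) by apply: ix_val; rewrite !ix_partner.
have h3 : val k != val (partner l) by apply: ix_val; rewrite !ix_partner.
have h4 : val l != val (partner k) by apply: ix_val; rewrite !ix_partner eq_sym.
rewrite !psiE !elin_addF !elinD.
rewrite (elin_anti (fun A => OO A h1)) (elin_anti (fun A => CC A h2)).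
rewrite (elin_anti (fun A => OC A h3)).
have -> : elin (Cc k) (elin (Oo l) x) = - elin (Oo l) (elin (Cc k) x).
  by rewrite (elin_anti (fun A => OC A h4)) opprK.
by rewrite !opprD addrACA.
Qed.


Lemma psiD n k (x y : ext n) : psi k (x + y) = psi k x + psi k y.
Proof. by rewrite !psiE elinD. Qed.
Lemma psiZ n k a (x : ext n) : psi k (sc a x) = sc a (psi k x).
Proof. by rewrite !psiE elinZ. Qed.
Lemma psi0 n k : psi k (0 : ext n) = 0.
Proof. by rewrite psiE elin0. Qed.

Lemma pseqD n s (x y : ext n) : psi_seq s (x + y) = psi_seq s x + psi_seq s y.
Proof. by elim: s => //= k s IH; rewrite IH psiD. Qed.
Lemma pseqZ n s a (x : ext n) : psi_seq s (sc a x) = sc a (psi_seq s x).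
Proof. by elim: s => //= k s IH; rewrite IH psiZ. Qed.
Lemma pseq0 n s : psi_seq s (0 : ext n) = 0.
Proof. by elim: s => //= k s IH; rewrite IH psi0. Qed.
Lemma pseq_sum n s (I : finType) (P : pred I) (G : I -> ext n) :
  psi_seq s (\sum_(i | P i) G i) = \sum_(i | P i) psi_seq s (G i).
Proof. exact: (big_morph _ (@pseqD n s) (@pseq0 n s)). Qed.
Lemma pseq_cat n s1 s2 (x : ext n) : psi_seq (s1 ++ s2) x = psi_seq s1 (psi_seq s2 x).
Proof. by rewrite /psi_seq foldr_cat. Qed.

Lemma psi_comm n k u (y : ext n) : all (fun l => ix l != ix k) u ->
  psi k (psi_seq u y) = sc ((-1) ^+ size u) (psi_seq u (psi k y)).
Proof.
elim: u => [|l u IH] /=; first by rewrite expr0 sc1.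
move=> /andP[nl hu]; rewrite psi_anti 1?eq_sym // IH // psiZ -scNl.
by rewrite exprS mulN1r.
Qed.

Lemma reorder n (i : nat) s (x : ext n) : exists t : nat,
  psi_seq s x = sc ((-1) ^+ t)
    (psi_seq ([seq k <- s | ix k == i] ++ [seq k <- s | ix k != i]) x).
Proof.
elim: s => [|k s [t IH]] /=; first by exists 0%N; rewrite expr0 sc1.
case: (eqVneq (ix k) i) => hk /=.
  by exists t; rewrite IH psiZ.
exists (t + size [seq k <- s | ix k == i])%N.
rewrite IH psiZ !pseq_cat psi_comm; last first.
  by apply/allP => l; rewrite mem_filter => /andP[/eqP-> _]; rewrite eq_sym.
by rewrite scA exprD.
Qed.


Definition pm (c : algC) := c = 1 \/ c = -1.

Lemma pm_sign t : pm ((-1) ^+ t).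
Proof. by rewrite /pm -signr_odd; case: (odd t); [right; rewrite expr1|left; rewrite expr0]. Qed.

Lemma pm_mul a b : pm a -> pm b -> pm (a * b).
Proof.
by case=> ->; case=> ->; rewrite ?mul1r ?mulN1r ?opprK; [left|right|right|left].
Qed.

Lemma pmK a : pm a -> a * a = 1.
Proof. by case=> ->; rewrite ?mul1r ?mulN1r ?opprK. Qed.

Lemma pm_sg n (A : {set 'I_(n+n)}) k : pm (sg A k).
Proof. exact: pm_sign. Qed.

Lemma psi_mono n k (A : {set 'I_(n+n)}) : psi k (mono A) = Oo k A + Cc k A.
Proof. by rewrite psiE elin_mono. Qed.

Lemma psi_free n k (A : {set 'I_(n+n)}) : k \notin A -> partner k \notin A ->
  psi k (mono A) = sc (sg A k) (mono (k |: A)).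
Proof. by move=> kA pA; rewrite psi_mono /Oo /Cc (negbTE kA) (negbTE pA) addr0. Qed.

Lemma B_kl n (k l : 'I_(n+n)) (A : {set 'I_(n+n)}) :
  partner k = l -> partner l = k -> k != l -> k \notin A -> l \notin A ->
  psi k (psi l (mono A)) = sc (sg A l * sg (l |: A) k) (mono (k |: (l |: A))) + mono A.
Proof.
move=> pk pl kl kA lA.
rewrite psi_free ?pl // psiZ psi_mono /Oo /Cc pk !in_setU1 eqxx (negbTE kl) (negbTE kA) /=.
rewrite scDr scA setU1K // [sg (l |: A) l]sgU1 // ltnn expr0 mul1r scA sgK sc1.
by [].
Qed.

Lemma B_efe n (e f : 'I_(n+n)) (A : {set 'I_(n+n)}) :
  partner e = f -> partner f = e -> e != f -> e \notin A -> f \notin A ->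
  psi e (psi f (psi e (mono A))) = sc (2 * sg A e) (mono (e |: A)).
Proof.
move=> pe pf ef eA fA.
have fe : f != e by rewrite eq_sym.
rewrite B_kl // psiD psiZ psi_mono /Oo /Cc pe !in_setU1 !eqxx orbT /= add0r scA.
have -> : (f |: (e |: A)) :\ f = e |: A by rewrite setU1K // in_setU1 (negbTE fe).
rewrite psi_free ?pe // [sg (f |: _) f]sgU1 ?in_setU1 ?(negbTE fe) // ltnn expr0 mul1r.
rewrite -mulrA sgK mulr1 -scDl.
by congr sc; rewrite mulrDl mul1r.
Qed.


Definition wrd n (I J : {set 'I_n}) :=
  map (@eidx n) (enum I) ++ map (@fidx n) (enum [set: 'I_n]) ++ rev (map (@eidx n) (enum J)).

Lemma beta_wrd n (I J : {set 'I_n}) : beta_e I J = psi_seq (wrd I J) (one_ext n).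
Proof. by rewrite /beta_e /wrd !pseq_cat. Qed.

Lemma ix_e n (i : 'I_n) : ix (eidx i) = i.
Proof. by rewrite /ix /eidx /= ltn_ord. Qed.
Lemma ix_f n (i : 'I_n) : ix (fidx i) = i.
Proof. by rewrite /ix /fidx /= ltnNge leq_addr /= addKn. Qed.
Lemma partner_e n (i : 'I_n) : partner (eidx i) = fidx i.
Proof. by rewrite /partner /eidx -[lshift n i]/(unsplit (inl i)) unsplitK. Qed.
Lemma partner_f n (i : 'I_n) : partner (fidx i) = eidx i.
Proof. by rewrite /partner /fidx -[rshift n i]/(unsplit (inr i)) unsplitK. Qed.
Lemma e_neq_f n (i j : 'I_n) : eidx i != fidx j.
Proof. by rewrite /eidx /fidx eq_lrshift. Qed.

Lemma filter_enum1 n (A : {set 'I_n}) (o : 'I_n) :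
  [seq i <- enum A | val i == val o] = if o \in A then [:: o] else [::].
Proof.
rewrite (@eq_filter _ _ (pred1 o)) //; case: ifP => h.
  by apply: filter_pred1_uniq; rewrite ?enum_uniq ?mem_enum.
apply/eqP; rewrite -size_eq0 size_filter.
by rewrite (count_uniq_mem o (enum_uniq (mem A))) mem_enum h.
Qed.

Lemma pre_e n (o : 'I_n) (s : seq 'I_n) :
  [seq i <- s | preim (@eidx n) (fun k => ix k == val o) i] = [seq i <- s | val i == val o].
Proof. by apply: eq_filter => i; rewrite /= ix_e. Qed.
Lemma pre_f n (o : 'I_n) (s : seq 'I_n) :
  [seq i <- s | preim (@fidx n) (fun k => ix k == val o) i] = [seq i <- s | val i == val o].
Proof. by apply: eq_filter => i; rewrite /= ix_f. Qed.

Lemma block_wrd n (I J : {set 'I_n}) (o : 'I_n) :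
  [seq k <- wrd I J | ix k == val o] =
  (if o \in I then [:: eidx o] else [::]) ++ fidx o :: (if o \in J then [:: eidx o] else [::]).
Proof.
rewrite /wrd !filter_cat filter_rev !filter_map !pre_e pre_f !filter_enum1 inE.
by case: (o \in I); case: (o \in J).
Qed.

Lemma filter_lt_eq n (s : seq 'I_(n+n)) m :
  [seq k <- [seq k <- s | (ix k < m.+1)%N] | ix k == m] = [seq k <- s | ix k == m].
Proof.
rewrite -filter_predI; apply: eq_filter => k /=.
by case: eqP => // ->; rewrite ltnSn.
Qed.

Lemma filter_lt_neq n (s : seq 'I_(n+n)) m :
  [seq k <- [seq k <- s | (ix k < m.+1)%N] | ix k != m] = [seq k <- s | (ix k < m)%N].
Proof.
rewrite -filter_predI; apply: eq_filter => k /=.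
by rewrite ltnS ltn_neqAle.
Qed.


Definition ltS n m : {set 'I_n} := [set i : 'I_n | (val i < m)%N].
Definition Gs n (I J : {set 'I_n}) m (R : {set 'I_n}) : {set 'I_(n+n)} :=
  (@eidx n @: ((I :&: J) :&: ltS n m :|: R)) :|:
  (@fidx n @: ((~: I :&: ~: J) :&: ltS n m :|: R)).
Definition Dset n (I J : {set 'I_n}) := (I :\: J) :|: (J :\: I).

Definition Inv n (I J : {set 'I_n}) m (x : ext n) :=
  exists eps : {set 'I_n} -> algC, (forall R : {set 'I_n}, pm (eps R)) /\
  x = sc (2 ^+ #|(I :&: J) :&: ltS n m|)
        (\sum_(R : {set 'I_n} | R \subset Dset I J :&: ltS n m) sc (eps R) (mono (Gs I J m R))).

Lemma ltS_succ n (o : 'I_n) : ltS n (val o).+1 = o |: ltS n (val o).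
Proof.
apply/setP => i; rewrite !inE ltnS leq_eqVlt; congr (_ || _).
Qed.

Lemma o_notin_lt n (o : 'I_n) : o \notin ltS n (val o).
Proof. by rewrite inE ltnn. Qed.

Lemma setI_U1_in (T : finType) (a : T) (X Y : {set T}) : a \in X -> X :&: (a |: Y) = a |: (X :&: Y).
Proof. by move=> aX; apply/setP => x; rewrite !inE; case: eqP => // ->; rewrite aX. Qed.

Lemma setI_U1_notin (T : finType) (a : T) (X Y : {set T}) : a \notin X -> X :&: (a |: Y) = X :&: Y.
Proof.
move=> aX; apply/setP => x; rewrite !inE; case: eqP => // ->.
by rewrite (negbTE aX).
Qed.

Lemma G_free n (I J : {set 'I_n}) (o : 'I_n) (R : {set 'I_n}) : R \subset ltS n (val o) ->
  (eidx o \notin Gs I J (val o) R) && (fidx o \notin Gs I J (val o) R).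
Proof.
move=> hR.
have oX : forall X : {set 'I_n}, o \notin X :&: ltS n (val o) :|: R.
  move=> X; rewrite !inE negb_or ltnn andbF /=.
  by apply/negP => /(subsetP hR); rewrite inE ltnn.
rewrite /Gs !in_setU !mem_imset; try by [apply: lshift_inj|apply: rshift_inj].
rewrite !(negbTE (oX _)) ?orbF /=.
apply/andP; split.
  apply/negP => H; move: H; move/imsetP => [j _ h].
  by move: (e_neq_f o j); rewrite h eqxx.
apply/negP => H; move: H; move/imsetP => [j _ h].
by move: (e_neq_f j o); rewrite h eqxx.
Qed.

Lemma GK n (I J : {set 'I_n}) (o : 'I_n) (R : {set 'I_n}) : o \in I -> o \in J ->
  Gs I J (val o).+1 R = eidx o |: Gs I J (val o) R.
Proof.
move=> oI oJ; rewrite /Gs ltS_succ setI_U1_in ?inE ?oI ?oJ //.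
rewrite setI_U1_notin ?inE ?oI //.
by rewrite -setUA imsetU1 setUA.
Qed.

Lemma GL n (I J : {set 'I_n}) (o : 'I_n) (R : {set 'I_n}) : o \notin I -> o \notin J ->
  Gs I J (val o).+1 R = fidx o |: Gs I J (val o) R.
Proof.
move=> oI oJ; rewrite /Gs ltS_succ [(~: I :&: ~: J) :&: _]setI_U1_in ?inE ?oI ?oJ //.
rewrite setI_U1_notin ?inE ?(negbTE oI) //.
by rewrite -setUA imsetU1 setUCA.
Qed.

Lemma GD0 n (I J : {set 'I_n}) (o : 'I_n) (R : {set 'I_n}) : (o \in I) (+) (o \in J) ->
  Gs I J (val o).+1 R = Gs I J (val o) R.
Proof.
move=> h; rewrite /Gs ltS_succ !setI_U1_notin //; move: h; rewrite !inE;
  by case: (o \in I); case: (o \in J).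
Qed.

Lemma GD1 n (I J : {set 'I_n}) (o : 'I_n) (R : {set 'I_n}) : (o \in I) (+) (o \in J) ->
  Gs I J (val o).+1 (o |: R) = eidx o |: (fidx o |: Gs I J (val o) R).
Proof.
move=> h; rewrite /Gs ltS_succ !setI_U1_notin; last 2 first.
- by move: h; rewrite !inE; case: (o \in I); case: (o \in J).
- by move: h; rewrite !inE; case: (o \in I); case: (o \in J).
rewrite (setUCA _ [set o] R) (setUCA _ [set o] R) !imsetU1.
apply/setP => x; rewrite !inE.
by case: (x == eidx o); case: (x == fidx o); rewrite ?orbT.
Qed.

Lemma subU1_notin (T : finType) (a : T) (X R : {set T}) : a \notin X ->
  (R \subset a |: X) && (a \notin R) = (R \subset X).
Proof.
move=> aX; apply/andP/idP => [[/subsetP sR aR]|sR].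
  apply/subsetP => x xR; have := sR x xR; rewrite in_setU1; case: eqP => // e.
  by move: aR; rewrite -e xR.
split; first by apply: (subset_trans sR); apply: subsetU1.
by apply: contra aX => /(subsetP sR).
Qed.

Lemma sum_subU1 n (T : finType) (a : T) (X : {set T}) (F : {set T} -> ext n) : a \notin X ->
  \sum_(R : {set T} | R \subset a |: X) F R = \sum_(R : {set T} | R \subset X) (F R + F (a |: R)).
Proof.
move=> aX; rewrite (bigID (fun R : {set T} => a \in R)) /= big_split /= addrC; congr (_ + _).
  by apply: eq_bigl => R; rewrite subU1_notin.
rewrite (reindex_onto (fun R => a |: R) (fun R => R :\ a)) /=; last first.
  by move=> R /andP[_ aR]; rewrite setD1K.
apply: eq_bigl => R; rewrite setU11 andbT.
case: (boolP (a \in R)) => aR.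
  have -> : ((a |: R) :\ a == R) = false.
    by apply/negbTE/negP => /eqP e; move: aR; rewrite -e !inE eqxx.
  rewrite andbF; apply/esym/negbTE/negP => /subsetP/(_ a aR).
  by rewrite (negbTE aX).
rewrite setU1K // eqxx andbT subUset sub1set setU11 /=.
by rewrite -(subU1_notin R aX) aR andbT.
Qed.


Lemma Inv_sign n (I J : {set 'I_n}) m (x : ext n) t :
  Inv I J m x -> Inv I J m (sc ((-1) ^+ t) x).
Proof.
move=> [eps [He ->]]; exists (fun R => (-1) ^+ t * eps R); split.
  by move=> R; apply: pm_mul; [apply: pm_sign|apply: He].
rewrite scA mulrC -scA sc_sumr; congr sc; apply: eq_bigr => R _.
by rewrite scA.
Qed.

Lemma sub_lt n (I J : {set 'I_n}) (o : 'I_n) (R : {set 'I_n}) :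
  R \subset Dset I J :&: ltS n (val o) -> R \subset ltS n (val o).
Proof. by move=> hR; apply: (subset_trans hR); apply: subsetIr. Qed.

Lemma oK_notin n (X : {set 'I_n}) (o : 'I_n) : o \notin X :&: ltS n (val o).
Proof. by rewrite !inE ltnn andbF. Qed.

Lemma stepK n (I J : {set 'I_n}) (o : 'I_n) (y : ext n) : o \in I -> o \in J ->
  Inv I J (val o) y -> Inv I J (val o).+1 (psi (eidx o) (psi (fidx o) (psi (eidx o) y))).
Proof.
move=> oI oJ [eps [He ->]].
exists (fun R => eps R * sg (Gs I J (val o) R) (eidx o)); split.
  by move=> R; apply: pm_mul; [apply: He|apply: pm_sg].
have D1 : Dset I J :&: ltS n (val o).+1 = Dset I J :&: ltS n (val o).
  by rewrite ltS_succ setI_U1_notin // !inE oI oJ.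
have K1 : (I :&: J) :&: ltS n (val o).+1 = o |: ((I :&: J) :&: ltS n (val o)).
  by rewrite ltS_succ setI_U1_in // inE oI oJ.
rewrite D1 K1 cardsU1 oK_notin add1n exprS mulrC -scA !psiZ.
congr sc; rewrite sc_sumr.
have -> : forall x : ext n, psi (eidx o) (psi (fidx o) (psi (eidx o) x)) =
    psi_seq [:: eidx o; fidx o; eidx o] x by [].
rewrite pseq_sum; apply: eq_bigr => R hR.
have /andP[eG fG] := G_free I J (sub_lt hR).
rewrite pseqZ /= B_efe ?partner_e ?partner_f ?e_neq_f // GK // !scA.
by congr sc; rewrite mulrCA.
Qed.

Lemma stepL n (I J : {set 'I_n}) (o : 'I_n) (y : ext n) : o \notin I -> o \notin J ->
  Inv I J (val o) y -> Inv I J (val o).+1 (psi (fidx o) y).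
Proof.
move=> oI oJ [eps [He ->]].
exists (fun R => eps R * sg (Gs I J (val o) R) (fidx o)); split.
  by move=> R; apply: pm_mul; [apply: He|apply: pm_sg].
have D1 : Dset I J :&: ltS n (val o).+1 = Dset I J :&: ltS n (val o).
  by rewrite ltS_succ setI_U1_notin // !inE (negbTE oI) (negbTE oJ).
have K1 : (I :&: J) :&: ltS n (val o).+1 = (I :&: J) :&: ltS n (val o).
  by rewrite ltS_succ setI_U1_notin // inE (negbTE oI).
rewrite D1 K1 psiZ; congr sc.
have -> : forall x : ext n, psi (fidx o) x = psi_seq [:: fidx o] x by [].
rewrite pseq_sum; apply: eq_bigr => R hR.
have /andP[eG fG] := G_free I J (sub_lt hR).
by rewrite pseqZ /= psi_free ?partner_f // GL // scA.
Qed.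

Lemma stepD n (I J : {set 'I_n}) (o : 'I_n) (eps s : {set 'I_n} -> algC) :
  (o \in I) (+) (o \in J) -> (forall R, pm (eps R)) -> (forall R, pm (s R)) ->
  Inv I J (val o).+1 (sc (2 ^+ #|(I :&: J) :&: ltS n (val o)|)
    (\sum_(R : {set 'I_n} | R \subset Dset I J :&: ltS n (val o))
       sc (eps R) (sc (s R) (mono (eidx o |: (fidx o |: Gs I J (val o) R)))
                   + mono (Gs I J (val o) R)))).
Proof.
move=> hx He Hs.
exists (fun R : {set 'I_n} => if o \in R then eps (R :\ o) * s (R :\ o) else eps R); split.
  by move=> R; case: ifP => _; [apply: pm_mul|].
have oD : o \in Dset I J by move: hx; rewrite !inE; case: (o \in I); case: (o \in J).
have D1 : Dset I J :&: ltS n (val o).+1 = o |: (Dset I J :&: ltS n (val o)).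
  by rewrite ltS_succ setI_U1_in.
have K1 : (I :&: J) :&: ltS n (val o).+1 = (I :&: J) :&: ltS n (val o).
  rewrite ltS_succ setI_U1_notin // inE.
  by move: hx; case: (o \in I); case: (o \in J).
rewrite D1 K1 sum_subU1 ?oK_notin //; congr sc; apply: eq_bigr => R hR.
have oR : o \notin R by apply: contra (o_notin_lt o) => /(subsetP (sub_lt hR)).
rewrite (negbTE oR) setU11 setU1K // GD0 // GD1 // scDr scA addrC.
by [].
Qed.

Lemma Inv0 n (I J : {set 'I_n}) : Inv I J 0 (one_ext n).
Proof.
exists (fun _ => 1); split; first by move=> R; left.
have L0 : ltS n 0 = set0 by apply/setP => i; rewrite !inE.
rewrite L0 !setI0 cards0 expr0 sc1.
rewrite (big_pred1 set0) => [|R]; last by rewrite subset0.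
by rewrite sc1 /Gs L0 !setI0 !setU0 !imset0 setU0.
Qed.


Lemma stepD' n (I J : {set 'I_n}) (o : 'I_n) (y : ext n) (k l : 'I_(n+n)) :
  (o \in I) (+) (o \in J) ->
  ((k == eidx o) && (l == fidx o)) || ((k == fidx o) && (l == eidx o)) ->
  Inv I J (val o) y -> Inv I J (val o).+1 (psi k (psi l y)).
Proof.
move=> hx hkl [eps [He ->]].
have pk : partner k = l /\ partner l = k /\ k != l.
  case/orP: hkl => /andP[/eqP-> /eqP->];
   by rewrite ?partner_e ?partner_f ?e_neq_f // eq_sym e_neq_f.
case: pk => pk [pl kl].
pose s R := sg (Gs I J (val o) R) l * sg (l |: Gs I J (val o) R) k.
have -> : psi k (psi l (sc (2 ^+ #|(I :&: J) :&: ltS n (val o)|)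
    (\sum_(R : {set 'I_n} | R \subset Dset I J :&: ltS n (val o))
       sc (eps R) (mono (Gs I J (val o) R))))) =
   sc (2 ^+ #|(I :&: J) :&: ltS n (val o)|)
    (\sum_(R : {set 'I_n} | R \subset Dset I J :&: ltS n (val o))
       sc (eps R) (sc (s R) (mono (eidx o |: (fidx o |: Gs I J (val o) R)))
                   + mono (Gs I J (val o) R))).
  rewrite !psiZ; congr sc.
  have -> : forall x : ext n, psi k (psi l x) = psi_seq [:: k; l] x by [].
  rewrite pseq_sum; apply: eq_bigr => R hR.
  have /andP[eG fG] := G_free I J (sub_lt hR).
  have kG : k \notin Gs I J (val o) R by case/orP: hkl => /andP[/eqP-> _].
  have lG : l \notin Gs I J (val o) R by case/orP: hkl => /andP[_ /eqP->].
  rewrite pseqZ /= B_kl //; congr (sc _ (sc _ (mono _) + _)).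
  by case/orP: hkl => /andP[/eqP-> /eqP->] //; rewrite setUCA.
by apply: stepD => // R; apply: pm_mul; apply: pm_sg.
Qed.

Lemma main_inv n (I J : {set 'I_n}) m : (m <= n)%N ->
  Inv I J m (psi_seq [seq k <- wrd I J | (ix k < m)%N] (one_ext n)).
Proof.
elim: m => [_|m IH hm].
  have -> : [seq k <- wrd I J | (ix k < 0)%N] = [::].
    by elim: (wrd I J) => //= k s ->; rewrite ltn0.
  exact: Inv0.
have hmn : (m < n)%N by [].
have IH' := IH (ltnW hmn).
pose o := Ordinal hmn.
have [t ->] := reorder m [seq k <- wrd I J | (ix k < m.+1)%N] (one_ext n).
apply: Inv_sign.
rewrite filter_lt_eq filter_lt_neq pseq_cat.
have -> : [seq k <- wrd I J | ix k == m] = [seq k <- wrd I J | ix k == val o] by [].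
rewrite block_wrd.
set y := psi_seq _ (one_ext n).
have Hy : Inv I J (val o) y by [].
case oI: (o \in I); case oJ: (o \in J) => /=.
- by apply: stepK; rewrite ?oI ?oJ.
- by apply: (@stepD' n I J o y (eidx o) (fidx o)); rewrite ?oI ?oJ ?eqxx.
- by apply: (@stepD' n I J o y (fidx o) (eidx o)); rewrite ?oI ?oJ ?eqxx ?orbT.
- by apply: stepL; rewrite ?oI ?oJ.
Qed.


Lemma wedge_mono n a (A B : {set 'I_(n+n)}) :
  wedge (sc a (mono A)) (mono B) = sc (a * wsign A B) (mono (A :|: B)).
Proof.
rewrite /wedge (bigD1 A) //= [X in _ + X]big1 => [|A' nA]; last first.
  by apply: big1 => B' _; rewrite !ffunE (negbTE nA) mulr0 !mul0r sc0.
rewrite addr0 (bigD1 B) //= big1 => [|B' nB]; last by rewrite !ffunE (negbTE nB) mulr0 mul0r sc0.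
by rewrite !ffunE !eqxx !mulr1 addr0.
Qed.

Lemma pm_wsign n (A B : {set 'I_(n+n)}) : [disjoint A & B] -> pm (wsign A B).
Proof. by move=> h; rewrite /wsign h; apply: pm_sign. Qed.

Lemma disjU (T : finType) (A B C : {set T}) :
  [disjoint A & C] -> [disjoint B & C] -> [disjoint A :|: B & C].
Proof. by rewrite -!setI_eq0 setIUl => /eqP-> /eqP->; rewrite setU0. Qed.

Lemma disj_ef n (X Y : {set 'I_n}) : [disjoint @eidx n @: X & @fidx n @: Y].
Proof.
rewrite -setI_eq0; apply/eqP/setP => x; rewrite !inE.
apply/negP => /andP[/imsetP[i _ ei] /imsetP[j _ fj]].
by move: (e_neq_f i j); rewrite -ei -fj eqxx.
Qed.

Lemma ix_lt n (k : 'I_(n+n)) : (ix k < n)%N.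
Proof.
rewrite /ix; case: ifP => // h.
by rewrite ltn_subLR ?ltn_ord // leqNgt h.
Qed.

Unset Implicit Arguments.

Theorem mainTheorem2 (n : nat) (I J : {set 'I_n}) :
  exists eps : {set 'I_n} -> algC,
    (forall R : {set 'I_n}, R \subset (I :\: J) :|: (J :\: I) ->
       eps R = 1 \/ eps R = -1) /\
    beta_e I J =
      sc ((2 : algC) ^+ #|I :&: J|)
        (\sum_(R : {set 'I_n} | R \subset (I :\: J) :|: (J :\: I))
          sc (eps R) (wedge (wedge (wedge (eS (I :&: J)) (eS R))
                                (fS (~: I :&: ~: J))) (fS R))).
Proof.
have [eps [He Hb]] := main_inv I J (leqnn n).
have Hw : [seq k <- wrd I J | (ix k < n)%N] = wrd I J.
  by apply/all_filterP/allP => k _; apply: ix_lt.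
rewrite Hw in Hb.
have LT : ltS n n = setT by apply/setP => i; rewrite !inE ltn_ord.
pose K := I :&: J; pose L := ~: I :&: ~: J.
pose sig (R : {set 'I_n}) := wsign (@eidx n @: K) (@eidx n @: R) *
  wsign (@eidx n @: K :|: @eidx n @: R) (@fidx n @: L) *
  wsign (@eidx n @: K :|: @eidx n @: R :|: @fidx n @: L) (@fidx n @: R).
have chain : forall R : {set 'I_n}, wedge (wedge (wedge (eS K) (eS R)) (fS L)) (fS R)
   = sc (sig R) (mono (Gs I J n R)).
  move=> R; rewrite /eS /fS -[mono (@eidx n @: K)]sc1 !wedge_mono mul1r.
  congr sc; rewrite /Gs LT !setIT !imsetU.
  by rewrite [in RHS]setUA.
have Dd : forall R : {set 'I_n}, R \subset Dset I J -> pm (sig R).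
  move=> R hR.
  have dK : [disjoint K & R].
    apply: (disjointWr hR); rewrite -setI_eq0; apply/eqP/setP => i; rewrite !inE.
    by case: (i \in I); case: (i \in J).
  have dL : [disjoint L & R].
    apply: (disjointWr hR); rewrite -setI_eq0; apply/eqP/setP => i; rewrite !inE.
    by case: (i \in I); case: (i \in J).
  apply: pm_mul; first apply: pm_mul; apply: pm_wsign.
  - by rewrite imset_disjoint //; apply: lshift_inj.
  - by apply: disjU; apply: disj_ef.
  - apply: disjU; first by apply: disjU; apply: disj_ef.
    by rewrite imset_disjoint //; apply: rshift_inj.
exists (fun R => eps R * sig R); split.
  by move=> R hR; apply: pm_mul; [apply: He|apply: Dd].
rewrite beta_wrd Hb LT !setIT; congr sc; apply: eq_bigr => R hR.
rewrite chain scA -mulrA pmK ?mulr1 //.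
exact: Dd.
Qed.
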